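(* Let $\mathcal P$ be a family of filters over some set $I$. A product $\prod_{j\in J} X_j$ of (nonempty) topological spaces is sequencewise $\mathcal P$-compact if and only if, for every $K\subseteq J$ with $|K|\leq|\mathcal P|$, the subproduct $\prod_{j\in K} X_j$ is sequencewise $\mathcal P$-compact.
   Context: No separation axioms are assumed; all topological spaces are nonempty. If $X$ is a topological space, $(x_i)_{i\in I}$ is an $I$-indexed sequence of elements of $X$ and $F$ is a filter over $I$, a point $x\in X$ is an $F$-limit point of $(x_i)_{i\in I}$ (equivalently, the sequence $F$-converges to $x$) if $\{i\in I\mid x_i\in U\}\in F$ for every open neighborhood $U$ of $x$. If $\mathcal P$ is a family of filters over $I$, a space $X$ is sequencewise $\mathcal P$-compact if for every $I$-indexed sequence of elements of $X$ there is $F\in\mathcal P$ such that the sequence has an $F$-limit point in $X$. *)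

(* Defs.v *)
From HB Require Import structures.
From mathcomp Require Import all_boot all_order.
From mathcomp Require Import all_classical all_reals all_analysis.
Set Implicit Arguments. Unset Strict Implicit. Unset Printing Implicit Defensive.
Local Open Scope classical_set_scope.

Definition F_limit_point {I : Type} {X : topologicalType}
  (F : set_system I) (s : I -> X) (x : X) : Prop :=
  forall U : set X, open U -> U x -> F [set i | U (s i)].

Definition seqwise_compact {I : Type} (P : set (set_system I))
  (X : topologicalType) : Prop :=
  forall s : I -> X, exists F, P F /\ exists x : X, F_limit_point F s x.

Definition subproduct {J : Type} (X : J -> topologicalType) (K : set J)
  : topologicalType := prod_topology (fun k : {j : J | K j} => X (proj1_sig k)).

(* Main.v *)
Require Import Defs.
From HB Require Import structures.
From mathcomp Require Import all_boot all_order.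
From mathcomp Require Import all_classical all_reals all_analysis.
Local Open Scope classical_set_scope.
Local Open Scope card_scope.
Set Implicit Arguments.

Section S.
Variables (J : Type) (X : J -> topologicalType).

Lemma proj_cont j : continuous (fun f : prod_topology X => f j).
Proof.
move=> f.
have := (@cvg_sup _ J (fun i => Topological.class
    (initial_topology (fun f : (forall i, X i) => f i))) (nbhs (f : prod_topology X)) f _).
move=> /(_ _) [+ _] => /(_ (@cvg_id _ _)) /(_ j) h.
apply: cvg_trans; last exact: (@initial_continuous _ _ (fun f : (forall i, X i) => f j) f).
move=> A /=; rewrite !nbhs_simpl /= => hA.
by apply: h.
Qed.
End S.
Section T.
Variables (I J : Type) (X : J -> topologicalType).
Lemma lim_coords (F : set_system I) (FF : Filter F) (s : I -> prod_topology X) (x : prod_topology X) :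
  (forall j, F_limit_point F (fun i => s i j) (x j)) -> F_limit_point F s x.
Proof.
move=> hj U oU Ux.
have hG : s @ F --> x.
  apply/(@cvg_sup _ J (fun i => Topological.class
    (initial_topology (fun f : (forall i, X i) => f i))) (s @ F) x _).
  move=> j A /=.
  move=> hA; have {hA}: @nbhs _ (initial_topology (fun f : (forall i, X i) => f j)) x A by exact: hA.
  rewrite nbhsE => -[B [[C oC <-] Bx] BA].
  change (F [set i | A (s i)]).
  by apply: filterS (hj j C oC Bx) => i Ci; exact: BA.
have : nbhs x U by apply: open_nbhs_nbhs.
by move=> /hG.
Qed.

Lemma lim_cont (F : set_system I) (Y Z : topologicalType) (g : Y -> Z) (s : I -> Y) y :
  continuous g -> F_limit_point F s y -> F_limit_point F (g \o s) (g y).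
Proof.
move=> /continuousP cg hl U oU Uy.
exact: (hl (g @^-1` U) (cg _ oU) Uy).
Qed.

Lemma lim_coord (F : set_system I) (s : I -> prod_topology X) x j :
  F_limit_point F s x -> F_limit_point F (fun i => s i j) (x j).
Proof. move=> h; exact: (@lim_cont F _ (X j) (fun f : prod_topology X => f j) s x (@proj_cont J X j) h). Qed.
End T.

Lemma inh_ex (T : Type) : inhabited T -> exists x : T, True.
Proof. by case=> x; exists x. Qed.
Arguments inh_ex {T}.

Unset Implicit Arguments.
Theorem theorem2p1 (I J : Type) (P : set (set_system I))
  (hP : forall F, P F -> ProperFilter F)
  (X : J -> topologicalType) (hX : forall j, inhabited (X j)) :
  seqwise_compact P (prod_topology X) <->
  (forall K : set J, K #<= P -> seqwise_compact P (subproduct X K)).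
Proof.
split.
- move=> H K _ s.
  pose d j : X j := proj1_sig (cid (inh_ex (hX j))).
  pose e : I -> prod_topology X := fun i j =>
    match pselect (K j) with left h => s i (exist _ j h) | right _ => d j end.
  have ee : forall i (k : {j | K j}), e i (proj1_sig k) = s i k.
    move=> i [j h] /=; rewrite /e; case: pselect => [h'|nh]; last by [].
    by rewrite (Prop_irrelevance h' h).
  have [F [PF [x hx]]] := H e.
  exists F; split => //.
  exists (fun k : {j | K j} => x (proj1_sig k)).
  have FF : Filter F by exact: (@filter_filter _ _ (hP F PF)).
  apply: lim_coords => k.
  have := lim_coord (proj1_sig k) hx.
  have -> : (fun i => e i (proj1_sig k)) = (fun i => s i k).
    by apply: funext => i; rewrite ee.
  by [].
- move=> H s; apply: contrapT => Hn.
  have step : forall F, P F -> exists j, ~ exists y, F_limit_point F (fun i => s i j) y.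
    move=> F PF; apply: contrapT => hn.
    have hy : forall j, exists y, F_limit_point F (fun i => s i j) y.
      move=> j; apply: contrapT => nj; apply: hn; by exists j.
    pose x j := proj1_sig (cid (hy j)).
    apply: Hn; exists F; split => //; exists x.
    have FF : Filter F by exact: (@filter_filter _ _ (hP F PF)).
    apply: lim_coords => j; exact: (proj2_sig (cid (hy j))).
  have [F0 [PF0 _]] := H set0 (card_ge0 J P)
     (fun i (k : {j | @set0 J j}) => False_rect _ (proj2_sig k)).
  have [j0 _] := step F0 PF0.
  pose g (F : set_system I) : J :=
    match pselect (P F) with left h => proj1_sig (cid (step F h)) | right _ => j0 end.
  have gs : forall F, P F -> ~ exists y, F_limit_point F (fun i => s i (g F)) y.
    move=> F PF; rewrite /g; case: pselect => [h|//].
    exact: (proj2_sig (cid (step F h))).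
  have [F [PF [y hy]]] := H (g @` P) (card_image_le g P)
    (fun i (k : {j | (g @` P) j}) => s i (proj1_sig k)).
  apply: (gs F PF); exists (y (exist _ (g F) (ex_intro2 _ _ F PF erefl))).
  exact: (lim_coord (exist _ (g F) (ex_intro2 _ _ F PF erefl)) hy).
Qed.
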